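(* $\mathbf{K}^{\nabla\bullet[\cdot]}$ is sound and complete with respect to the class of all frames: for every $\phi\in\mathcal{L}(\nabla,\bullet,[\cdot])$, $\vdash_{\mathbf{K}^{\nabla\bullet[\cdot]}}\phi$ iff $\phi$ is true at every state of every Kripke model.
   Context: Over a nonempty set $\mathbf{P}$ of propositional variables, $\mathcal{L}(\nabla,\bullet,[\cdot])$ is given by $\phi::=p\mid\neg\phi\mid\phi\land\phi\mid\nabla\phi\mid\bullet\phi\mid[\phi]\phi$; $\Delta\phi:=\neg\nabla\phi$, $\circ\phi:=\neg\bullet\phi$. Kripke models $\mathcal{M}=\langle S,R,V\rangle$: $s\vDash\nabla\phi$ iff there are $t,u$ with $sRt$, $sRu$, $t\vDash\phi$, $u\nvDash\phi$; $s\vDash\bullet\phi$ iff $s\vDash\phi$ and there is $t$ with $sRt$, $t\nvDash\phi$; $\mathcal{M},s\vDash[\psi]\phi$ iff ($\mathcal{M},s\vDash\psi$ implies $\mathcal{M}|_\psi,s\vDash\phi$), where $\mathcal{M}|_\psi$ is the restriction of $\mathcal{M}$ (domain, relation, valuation) to the set of states where $\psi$ is true in $\mathcal{M}$. The system $\mathbf{K}^{\nabla\bullet[\cdot]}$ consists of the axioms and rules of $\mathbf{K}^{\nabla\bullet}$ applied to the extended language — A0 all propositional tautologies; A1 $\bullet\phi\to\phi$; A2 $\nabla\phi\leftrightarrow\nabla\neg\phi$; A3 $\bullet(\psi\to\phi)\land\phi\to\bullet\phi$; A4 $\nabla(\phi\land\psi)\to\nabla\phi\vee\nabla\psi$; A5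 $\bullet(\phi\land\psi)\to\bullet\phi\vee\bullet\psi$; A6 $\nabla\phi\to\bullet\phi\vee\bullet\neg\phi$; A7 $\bullet(\phi\to\psi)\land\bullet(\neg\phi\to\chi)\to\nabla\phi$; R1 $\phi/\Delta\phi$; R2 $\phi/\circ\phi$; R3 $\phi\leftrightarrow\psi/\Delta\phi\leftrightarrow\Delta\psi$; R4 $\phi\leftrightarrow\psi/\circ\phi\leftrightarrow\circ\psi$; MP — together with the reduction axioms AP $[\psi]p\leftrightarrow(\psi\to p)$; AN $[\psi]\neg\phi\leftrightarrow(\psi\to\neg[\psi]\phi)$; AC $[\psi](\phi\land\chi)\leftrightarrow([\psi]\phi\land[\psi]\chi)$; AA $[\psi][\chi]\phi\leftrightarrow[\psi\land[\psi]\chi]\phi$; A$\nabla$ $[\psi]\nabla\phi\leftrightarrow(\psi\to\nabla[\psi]\phi\land\nabla[\psi]\neg\phi)$; A$\bullet$ $[\psi]\bullet\phi\leftrightarrow(\psi\to\bullet[\psi]\phi)$ (and, as is standard for the reduction method, replacement of provable equivalents). *)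

(* Defs.v *)
Set Implicit Arguments.

Section Syntax.
Variable P : Type.

Inductive form : Type :=
| Var : P -> form
| Neg : form -> form
| And : form -> form -> form
| Nab : form -> form
| Bul : form -> form
| Ann : form -> form -> form.   (* Ann psi phi = [psi]phi *)

Definition Imp (a b : form) : form := Neg (And a (Neg b)).
Definition Or (a b : form) : form := Neg (And (Neg a) (Neg b)).
Definition Iff (a b : form) : form := And (Imp a b) (Imp b a).
Definition Delta (a : form) : form := Neg (Nab a).
Definition Circ (a : form) : form := Neg (Bul a).

(* Boolean evaluation treating non-Boolean subformulas as atoms:
   phi is a (substitution instance of a) propositional tautology iff it is
   true under every assignment to its propositional atoms. *)
Fixpoint beval (v : form -> bool) (f : form) : bool :=
  match f with
  | Neg a => negb (beval v a)
  | And a b => andb (beval v a) (beval v b)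
  | _ => v f
  end.

Definition tautology (f : form) : Prop := forall v : form -> bool, beval v f = true.

Inductive ctx : Type :=
| Hole : ctx
| CNeg : ctx -> ctx
| CAndL : ctx -> form -> ctx
| CAndR : form -> ctx -> ctx
| CNab : ctx -> ctx
| CBul : ctx -> ctx
| CAnnL : ctx -> form -> ctx
| CAnnR : form -> ctx -> ctx.

Fixpoint plug (c : ctx) (f : form) : form :=
  match c with
  | Hole => f
  | CNeg c' => Neg (plug c' f)
  | CAndL c' b => And (plug c' f) b
  | CAndR a c' => And a (plug c' f)
  | CNab c' => Nab (plug c' f)
  | CBul c' => Bul (plug c' f)
  | CAnnL c' b => Ann (plug c' f) b
  | CAnnR a c' => Ann a (plug c' f)
  end.

Inductive provable : form -> Prop :=
| A0 : forall f, tautology f -> provable f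
| A1 : forall f, provable (Imp (Bul f) f)
| A2 : forall f, provable (Iff (Nab f) (Nab (Neg f)))
| A3 : forall f g, provable (Imp (And (Bul (Imp g f)) f) (Bul f))
| A4 : forall f g, provable (Imp (Nab (And f g)) (Or (Nab f) (Nab g)))
| A5 : forall f g, provable (Imp (Bul (And f g)) (Or (Bul f) (Bul g)))
| A6 : forall f, provable (Imp (Nab f) (Or (Bul f) (Bul (Neg f))))
| A7 : forall f g h,
    provable (Imp (And (Bul (Imp f g)) (Bul (Imp (Neg f) h))) (Nab f))
| R1 : forall f, provable f -> provable (Delta f)
| R2 : forall f, provable f -> provable (Circ f)
| R3 : forall f g, provable (Iff f g) -> provable (Iff (Delta f) (Delta g))
| R4 : forall f g, provable (Iff f g) -> provable (Iff (Circ f) (Circ g))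
| MP : forall f g, provable (Imp f g) -> provable f -> provable g
| AP : forall psi p, provable (Iff (Ann psi (Var p)) (Imp psi (Var p)))
| AN : forall psi f,
    provable (Iff (Ann psi (Neg f)) (Imp psi (Neg (Ann psi f))))
| AC : forall psi f g,
    provable (Iff (Ann psi (And f g)) (And (Ann psi f) (Ann psi g)))
| AA : forall psi chi f,
    provable (Iff (Ann psi (Ann chi f)) (Ann (And psi (Ann psi chi)) f))
| ANab : forall psi f,
    provable (Iff (Ann psi (Nab f))
                  (Imp psi (And (Nab (Ann psi f)) (Nab (Ann psi (Neg f))))))
| ABul : forall psi f,
    provable (Iff (Ann psi (Bul f)) (Imp psi (Bul (Ann psi f))))
| RE : forall (c : ctx) f g,
    provable (Iff f g) -> provable (Iff (plug c f) (plug c g)).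

End Syntax.

Arguments Var {P}.

Record model (P : Type) : Type := Model {
  state : Type;
  rel : state -> state -> Prop;
  val : P -> state -> Prop
}.

Arguments state {P}.
Arguments rel {P}.
Arguments val {P}.

Definition restrict (P : Type) (M : model P) (Q : state M -> Prop) : model P :=
  @Model P {s : state M | Q s}
    (fun s t => rel M (proj1_sig s) (proj1_sig t))
    (fun p s => val M p (proj1_sig s)).

Fixpoint sat (P : Type) (M : model P) (s : state M) (f : form P) {struct f} : Prop :=
  match f with
  | Var p => val M p s
  | Neg a => ~ sat M s a
  | And a b => sat M s a /\ sat M s b
  | Nab a => exists t u, rel M s t /\ rel M s u /\ sat M t a /\ ~ sat M u a
  | Bul a => sat M s a /\ exists t, rel M s t /\ ~ sat M t a
  | Ann psi a =>
      forall H : sat M s psi,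
        sat (restrict M (fun t => sat M t psi))
            (exist (fun t => sat M t psi) s H) a
  end.

Definition valid (P : Type) (f : form P) : Prop :=
  forall (M : model P) (s : state M), sat M s f.

(* Main.v *)
Require Import Defs.
From Stdlib Require Import Classical ClassicalEpsilon ProofIrrelevance List Cantor PeanoNat.
Set Implicit Arguments.

Arguments Hole {P}.
Arguments CNeg {P}. Arguments CAndL {P}. Arguments CAndR {P}. Arguments CNab {P}.
Arguments CBul {P}. Arguments CAnnL {P}. Arguments CAnnR {P}.

Ltac taut :=
  let v := fresh "v" in intro v; unfold Imp, Iff, Or, Delta, Circ in *; simpl;
  repeat match goal with
  | |- context [beval v ?x] => destruct (beval v x)
  | |- context [v ?x] => destruct (v x)
  end; reflexivity.

Lemma taut_mp (P : Type) (a b : form P) :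
  tautology (Imp a b) -> provable a -> provable b.
Proof. intros H Ha. eapply MP; [apply A0; exact H| exact Ha]. Qed.

Lemma prov_taut1 (P : Type) (a b : form P) :
  provable a -> tautology (Imp a b) -> provable b.
Proof. intros. eapply taut_mp; eauto. Qed.

Lemma prov_taut2 (P : Type) (a b c : form P) :
  provable a -> provable b -> tautology (Imp a (Imp b c)) -> provable c.
Proof. intros Ha Hb H. eapply MP; [|exact Hb]. eapply MP; [apply A0; exact H| exact Ha]. Qed.

Lemma iff_sym (P : Type) (a b : form P) : provable (Iff a b) -> provable (Iff b a).
Proof. intro H. eapply prov_taut1; [exact H|]. taut. Qed.

Lemma iff_trans (P : Type) (a b c : form P) :
  provable (Iff a b) -> provable (Iff b c) -> provable (Iff a c).
Proof. intros H1 H2. eapply prov_taut2; [exact H1|exact H2|]. taut. Qed.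

Lemma iff_refl (P : Type) (a : form P) : provable (Iff a a).
Proof. apply A0. taut. Qed.

Lemma iff_taut (P : Type) (a b : form P) : tautology (Iff a b) -> provable (Iff a b).
Proof. apply A0. Qed.

Lemma cong_neg (P : Type) (a b : form P) : provable (Iff a b) -> provable (Iff (Neg a) (Neg b)).
Proof. intro H. exact (RE (CNeg Hole) H). Qed.
Lemma cong_nab (P : Type) (a b : form P) : provable (Iff a b) -> provable (Iff (Nab a) (Nab b)).
Proof. intro H. exact (RE (CNab Hole) H). Qed.
Lemma cong_bul (P : Type) (a b : form P) : provable (Iff a b) -> provable (Iff (Bul a) (Bul b)).
Proof. intro H. exact (RE (CBul Hole) H). Qed.
Lemma cong_and (P : Type) (a b a' b' : form P) : provable (Iff a a') -> provable (Iff b b') ->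
  provable (Iff (And a b) (And a' b')).
Proof. intros H1 H2. eapply iff_trans. exact (RE (CAndL Hole b) H1). exact (RE (CAndR a' Hole) H2). Qed.
Lemma cong_ann (P : Type) (a b a' b' : form P) : provable (Iff a a') -> provable (Iff b b') ->
  provable (Iff (Ann a b) (Ann a' b')).
Proof. intros H1 H2. eapply iff_trans. exact (RE (CAnnL Hole b) H1). exact (RE (CAnnR a' Hole) H2). Qed.
Lemma cong_imp (P : Type) (a b a' b' : form P) : provable (Iff a a') -> provable (Iff b b') ->
  provable (Iff (Imp a b) (Imp a' b')).
Proof. intros H1 H2. unfold Imp. apply cong_neg, cong_and; auto. apply cong_neg; auto. Qed.

Lemma exist_eq (A : Type) (Q : A -> Prop) (x y : A) (Hx : Q x) (Hy : Q y) :
  x = y -> exist Q x Hx = exist Q y Hy.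
Proof. intro e. subst. f_equal. apply proof_irrelevance. Qed.

Lemma sat_iso (P : Type) (f : form P) : forall (M N : model P) (h : state M -> state N)
  (k : state N -> state M), (forall x, k (h x) = x) -> (forall y, h (k y) = y) ->
  (forall x y, rel M x y <-> rel N (h x) (h y)) -> (forall p x, val M p x <-> val N p (h x)) ->
  forall x, sat M x f <-> sat N (h x) f.
Proof.
  induction f as [p|a IHa|a IHa b IHb|a IHa|a IHa|a IHa b IHb];
    intros M N h k e1 e2 e3 e4 x; simpl.
  - apply e4.
  - rewrite (IHa M N h k e1 e2 e3 e4 x). tauto.
  - rewrite (IHa M N h k e1 e2 e3 e4 x), (IHb M N h k e1 e2 e3 e4 x). tauto.
  - split.
    + intros [t [u [H1 [H2 [H3 H4]]]]]. exists (h t), (h u).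
      rewrite <- e3, <- e3, <- (IHa M N h k e1 e2 e3 e4 t), <- (IHa M N h k e1 e2 e3 e4 u). tauto.
    + intros [t [u [H1 [H2 [H3 H4]]]]]. exists (k t), (k u).
      rewrite e3, e3, (IHa M N h k e1 e2 e3 e4), (IHa M N h k e1 e2 e3 e4), !e2. tauto.
  - split.
    + intros [H1 [t [H2 H3]]]. split. apply IHa with (k:=k); auto. exists (h t).
      rewrite <- e3, <- (IHa M N h k e1 e2 e3 e4 t). tauto.
    + intros [H1 [t [H2 H3]]]. split. apply (IHa M N h k e1 e2 e3 e4); auto. exists (k t).
      rewrite e3, (IHa M N h k e1 e2 e3 e4), !e2. tauto.
  - assert (Ha : forall t, sat M t a <-> sat N (h t) a) by (apply IHa with (k:=k); auto).
    assert (Hb' : forall y, sat N y a -> sat M (k y) a)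
      by (intros y Hy; apply Ha; rewrite e2; exact Hy).
    set (h' := fun z : {t | sat M t a} =>
               exist (fun u => sat N u a) (h (proj1_sig z)) (proj1 (Ha _) (proj2_sig z))).
    set (k' := fun z : {u | sat N u a} =>
               exist (fun t => sat M t a) (k (proj1_sig z)) (Hb' _ (proj2_sig z))).
    assert (Hb : forall z, sat (restrict M (fun t => sat M t a)) z b <->
                      sat (restrict N (fun u => sat N u a)) (h' z) b).
    { apply IHb with (k := k').
      - intros [z Hz]. apply exist_eq. apply e1.
      - intros [z Hz]. apply exist_eq. apply e2.
      - intros [z Hz] [w Hw]. simpl. apply e3.
      - intros p [z Hz]. simpl. apply e4. }
    split.
    + intros H H'. specialize (H (proj2 (Ha x) H')). rewrite Hb in H.
      unfold h' in H. simpl in H.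
      erewrite exist_eq; [exact H|reflexivity].
    + intros H H'. rewrite Hb. unfold h'; simpl.
      erewrite exist_eq; [apply (H (proj1 (Ha x) H'))|reflexivity].
Qed.

Lemma sat_imp (P : Type) (M : model P) s a b : sat M s (Imp a b) <-> (sat M s a -> sat M s b).
Proof. unfold Imp; simpl. split; intros H. intros Ha. apply NNPP. intro. apply H; auto. tauto. Qed.
Lemma sat_iff (P : Type) (M : model P) s a b : sat M s (Iff a b) <-> (sat M s a <-> sat M s b).
Proof.
  assert (E : sat M s (Iff a b) <-> sat M s (Imp a b) /\ sat M s (Imp b a)) by reflexivity.
  rewrite E, !sat_imp. tauto. Qed.
Lemma sat_or (P : Type) (M : model P) s a b : sat M s (Or a b) <-> (sat M s a \/ sat M s b).
Proof. unfold Or; simpl. split; intros H. apply NNPP. tauto. tauto. Qed.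

Opaque Imp Iff Or.

Definition bv (P : Type) (M : model P) (s : state M) (x : form P) : bool :=
  if excluded_middle_informative (sat M s x) then true else false.

Lemma bv_sat (P : Type) (M : model P) s x : bv M s x = true <-> sat M s x.
Proof. unfold bv; destruct excluded_middle_informative as [h|h]; split; intro; auto; try discriminate; contradiction. Qed.

Lemma beval_sat (P : Type) (M : model P) s f : beval (bv M s) f = true <-> sat M s f.
Proof.
  induction f; try apply bv_sat; simpl.
  - rewrite <- IHf. destruct (beval (bv M s) f); simpl; split; intro; auto; try discriminate; congruence.
  - rewrite <- IHf1, <- IHf2. destruct (beval (bv M s) f1), (beval (bv M s) f2); simpl; split; intro; auto; try discriminate; intuition.
Qed.

Lemma sem_re (P : Type) (f g : form P) : (forall (M : model P) s, sat M s f <-> sat M s g) ->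
  forall c (M : model P) s, sat M s (plug c f) <-> sat M s (plug c g).
Proof.
  intros Hfg c. induction c as [|c IH|c IH b|b c IH|c IH|c IH|c IH b|b c IH]; intros M s; simpl.
  - apply Hfg.
  - rewrite IH; tauto.
  - rewrite IH; tauto.
  - rewrite IH; tauto.
  - split; intros [t [u [H1 [H2 [H3 H4]]]]]; exists t, u; rewrite ?IH in *; rewrite <- ?IH in *; tauto.
  - split; intros [H1 [t [H2 H3]]]; (split; [rewrite ?IH in *; rewrite <- ?IH in *; tauto|]);
      exists t; rewrite ?IH in *; rewrite <- ?IH in *; tauto.
  - set (h := fun z : {t | sat M t (plug c f)} =>
           exist (fun u => sat M u (plug c g)) (proj1_sig z) (proj1 (IH M _) (proj2_sig z))).
    set (k := fun z : {t | sat M t (plug c g)} =>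
           exist (fun u => sat M u (plug c f)) (proj1_sig z) (proj2 (IH M _) (proj2_sig z))).
    assert (Hb : forall z, sat (restrict M (fun t => sat M t (plug c f))) z b <->
                      sat (restrict M (fun u => sat M u (plug c g))) (h z) b).
    { apply sat_iso with (k := k).
      - intros [z Hz]. apply exist_eq. reflexivity.
      - intros [z Hz]. apply exist_eq. reflexivity.
      - intros [z Hz] [w Hw]. simpl. tauto.
      - intros p [z Hz]. simpl. tauto. }
    split.
    + intros H H'. specialize (H (proj2 (IH M s) H')). rewrite Hb in H.
      unfold h in H. simpl in H. erewrite exist_eq; [exact H|reflexivity].
    + intros H H'. rewrite Hb. unfold h; simpl.
      erewrite exist_eq; [apply (H (proj1 (IH M s) H'))|reflexivity].
  - split; intros H H'; specialize (H H'); apply IH; exact H.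
Qed.

Lemma sat_ann_pi (P : Type) (M : model P) (Q : state M -> Prop) s (H1 H2 : Q s) f :
  sat (restrict M Q) (exist Q s H1) f -> sat (restrict M Q) (exist Q s H2) f.
Proof. intro H. rewrite (proof_irrelevance _ H2 H1). exact H. Qed.

Lemma soundness (P : Type) (f : form P) : provable f -> valid f.
Proof.
  intro Hp. induction Hp; intros M s.
  - apply beval_sat. apply H.
  - rewrite sat_imp. simpl. tauto.
  - rewrite sat_iff. simpl. split; intros [t [u [H1 [H2 [H3 H4]]]]].
    + exists u, t. intuition.
    + exists u, t. intuition. apply NNPP; auto.
  - rewrite sat_imp. simpl. rewrite sat_imp. intros [[H1 [t [H2 H3]]] H4]. split; auto.
    exists t. split; auto. intro. apply H3. rewrite sat_imp. auto.
  - rewrite sat_imp, sat_or. simpl. intros [t [u [H1 [H2 [[H3 H3'] H4]]]]].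
    destruct (classic (sat M u f)).
    + right. exists t, u. intuition.
    + left. exists t, u. intuition.
  - rewrite sat_imp, sat_or. simpl. intros [[H1 H1'] [t [H2 H3]]].
    destruct (classic (sat M t f)).
    + right. intuition. exists t. intuition.
    + left. intuition. exists t. intuition.
  - rewrite sat_imp, sat_or. simpl. intros [t [u [H1 [H2 [H3 H4]]]]].
    destruct (classic (sat M s f)).
    + left. intuition. exists u. auto.
    + right. intuition. exists t. auto.
  - rewrite sat_imp. simpl. rewrite !sat_imp. intros [[_ [t [H1 H2]]] [_ [u [H3 H4]]]].
    exists t, u. split; [auto|split; [auto|split]].
    + apply NNPP. intro. apply H2. rewrite sat_imp. intro; contradiction.
    + intro. apply H4. rewrite sat_imp. intro. contradiction.
  - simpl. intros [t [u [_ [_ [_ H]]]]]. apply H. apply IHHp.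
  - simpl. intros [_ [t [_ H]]]. apply H. apply IHHp.
  - rewrite sat_iff. refine (@sem_re P f g _ (CNeg (CNab Hole)) M s). intros. rewrite <- sat_iff. apply IHHp.
  - rewrite sat_iff. refine (@sem_re P f g _ (CNeg (CBul Hole)) M s). intros. rewrite <- sat_iff. apply IHHp.
  - specialize (IHHp1 M s). rewrite sat_imp in IHHp1. auto.
  - rewrite sat_iff, sat_imp. simpl. tauto.
  - rewrite sat_iff, sat_imp. simpl. split.
    + intros H H1 H2. apply (H H1). apply H2.
    + intros H H1 H2. apply (H H1). intro H3. eapply sat_ann_pi. exact H2.
  - rewrite sat_iff. simpl. split.
    + intro H. split; intro H1; apply H.
    + intros H H1. split; apply H.
  -
    rewrite sat_iff. simpl.
    set (M1 := restrict M (fun t => sat M t psi)).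
    set (Q1 := fun t : state M1 => sat M1 t chi).
    set (Q2 := fun t => sat M t psi /\ (forall H : sat M t psi,
                 sat M1 (exist (fun t => sat M t psi) t H) chi)).
    assert (Hh : forall z : {t : state M1 | Q1 t}, Q2 (proj1_sig (proj1_sig z))).
    { intros [[t Ht] Hc]. split; auto. intros H. eapply sat_ann_pi. exact Hc. }
    assert (Hk : forall z : {t | Q2 t}, sat M (proj1_sig z) psi) by (intros [z Hz]; apply Hz).
    assert (Hk2 : forall z : {t | Q2 t}, Q1 (exist _ (proj1_sig z) (Hk z))).
    { intros [z Hz]. apply Hz. }
    set (h := fun z : {t : state M1 | Q1 t} => exist Q2 (proj1_sig (proj1_sig z)) (Hh z)).
    set (k := fun z : {t | Q2 t} => exist Q1 (exist _ (proj1_sig z) (Hk z)) (Hk2 z)).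
    assert (Hiso : forall z, sat (restrict M1 Q1) z f <-> sat (restrict M Q2) (h z) f).
    { apply sat_iso with (k := k).
      - intros [[z Hz] Hz']. apply exist_eq. apply exist_eq. reflexivity.
      - intros [z Hz]. apply exist_eq. reflexivity.
      - intros [[z Hz] Hz'] [[w Hw] Hw']. simpl. tauto.
      - intros p [[z Hz] Hz']. simpl. tauto. }
    split.
    + intros H [H1 H2]. specialize (H H1 (H2 H1)).
      pose proof (proj1 (Hiso (exist Q1 (exist _ s H1) (H2 H1))) H) as H'.
      unfold h in H'; simpl in H'. erewrite exist_eq; [exact H'|reflexivity].
    + intros H H1 H2. refine (proj2 (Hiso (exist Q1 (exist _ s H1) H2)) _). unfold h; simpl.
      assert (H3 : Q2 s). { split; auto. intro. eapply sat_ann_pi; exact H2. }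
      erewrite exist_eq; [apply (H H3)|reflexivity].
  -
    rewrite sat_iff, sat_imp. simpl. split.
    + intros H H1. specialize (H H1). destruct H as [[t Ht] [[u Hu] [H2 [H3 [H4 H5]]]]].
      simpl in *. split.
      * exists t, u. split; [exact H2|split; [exact H3|split]].
        -- intro H6. eapply sat_ann_pi. exact H4.
        -- intro H6. apply H5. exact (H6 Hu).
      * exists u, t. split; [exact H3|split; [exact H2|split]].
        -- intros H6 H7. apply H5. eapply sat_ann_pi. exact H7.
        -- intro H6. exact (H6 Ht H4).
    + intros H H1. specialize (H H1).
      destruct H as [[t [u [H2 [H3 [H4 H5]]]]] [t' [u' [H2' [H3' [H4' H5']]]]]].
      assert (Hu : sat M u psi) by (apply NNPP; intro; apply H5; intro; contradiction).
      assert (Hu' : sat M u' psi) by (apply NNPP; intro; apply H5'; intro; contradiction).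
      exists (exist _ u' Hu'), (exist _ u Hu). simpl. split; [exact H3'|split; [exact H3|split]].
      * apply NNPP. intro H6. apply H5'. intros H7 H8. apply H6. eapply sat_ann_pi. exact H8.
      * intro H6. apply H5. intro H7. eapply sat_ann_pi. exact H6.
  -
    rewrite sat_iff, sat_imp. simpl. split.
    + intros H H1. specialize (H H1). destruct H as [H2 [[t Ht] [H3 H4]]]. split.
      * intro H5. eapply sat_ann_pi. exact H2.
      * exists t. simpl in *. split; [exact H3|]. intro H5. apply H4. apply H5.
    + intros H H1. specialize (H H1). destruct H as [H2 [t [H3 H4]]].
      assert (Ht : sat M t psi) by (apply NNPP; intro; apply H4; intro; contradiction).
      split. apply H2. exists (exist _ t Ht). simpl. split; [exact H3|].
      intro H5. apply H4. intro H6. eapply sat_ann_pi. exact H5.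
  - rewrite sat_iff. apply sem_re. intros. rewrite <- sat_iff. apply IHHp.
Qed.

Transparent Imp Iff Or.

Fixpoint rename (A B : Type) (g : A -> B) (f : form A) : form B :=
  match f with
  | Var p => Var (g p)
  | Neg a => Neg (rename g a)
  | And a b => And (rename g a) (rename g b)
  | Nab a => Nab (rename g a)
  | Bul a => Bul (rename g a)
  | Ann a b => Ann (rename g a) (rename g b)
  end.

Fixpoint rename_ctx (A B : Type) (g : A -> B) (c : ctx A) : ctx B :=
  match c with
  | Hole => Hole
  | CNeg c => CNeg (rename_ctx g c)
  | CAndL c b => CAndL (rename_ctx g c) (rename g b)
  | CAndR a c => CAndR (rename g a) (rename_ctx g c)
  | CNab c => CNab (rename_ctx g c)
  | CBul c => CBul (rename_ctx g c)
  | CAnnL c b => CAnnL (rename_ctx g c) (rename g b)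
  | CAnnR a c => CAnnR (rename g a) (rename_ctx g c)
  end.

Lemma rename_plug (A B : Type) (g : A -> B) c f :
  rename g (plug c f) = plug (rename_ctx g c) (rename g f).
Proof. induction c; simpl; congruence. Qed.

Lemma beval_rename (A B : Type) (g : A -> B) v f :
  beval v (rename g f) = beval (fun x => v (rename g x)) f.
Proof. induction f; simpl; congruence. Qed.

Lemma provable_rename (A B : Type) (g : A -> B) f : provable f -> provable (rename g f).
Proof.
  intro H. induction H; simpl.
  - apply A0. intro v. rewrite beval_rename. apply H.
  - apply A1.
  - apply A2.
  - apply A3.
  - apply A4.
  - apply A5.
  - apply A6.
  - apply A7.
  - apply R1; exact IHprovable.
  - apply R2; exact IHprovable.
  - apply R3; exact IHprovable.
  - apply R4; exact IHprovable.
  - eapply MP; [exact IHprovable1|exact IHprovable2].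
  - apply AP.
  - apply AN.
  - apply AC.
  - apply AA.
  - apply ANab.
  - apply ABul.
  - rewrite !rename_plug. apply RE. exact IHprovable.
Qed.

Definition mren (A B : Type) (M : model B) (g : A -> B) : model A :=
  @Model A (state M) (rel M) (fun p s => val M (g p) s).

Lemma sat_rename (A B : Type) (g : A -> B) (f : form A) : forall (M : model B) s,
  sat (mren M g) s f <-> sat M s (rename g f).
Proof.
  induction f as [p|a IHa|a IHa b IHb|a IHa|a IHa|a IHa b IHb]; intros M s; simpl.
  - tauto.
  - rewrite IHa; tauto.
  - rewrite IHa, IHb; tauto.
  - split; intros [t [u H]]; exists t, u; rewrite ?IHa in *; rewrite <- ?IHa in *; tauto.
  - split; intros [H1 [t H]]; (split; [rewrite ?IHa in *; rewrite <- ?IHa in *; tauto|]);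
      exists t; rewrite ?IHa in *; rewrite <- ?IHa in *; tauto.
  - set (N := restrict M (fun t => sat M t (rename g a))).
    set (h := fun z : {t | sat (mren M g) t a} =>
           exist (fun u => sat M u (rename g a)) (proj1_sig z) (proj1 (IHa M _) (proj2_sig z))).
    set (k := fun z : {t | sat M t (rename g a)} =>
           exist (fun u => sat (mren M g) u a) (proj1_sig z) (proj2 (IHa M _) (proj2_sig z))).
    assert (Hb : forall z, sat (restrict (mren M g) (fun t => sat (mren M g) t a)) z b <->
                      sat (mren N g) (h z) b).
    { apply sat_iso with (k := k).
      - intros [z Hz]. apply exist_eq. reflexivity.
      - intros [z Hz]. apply exist_eq. reflexivity.
      - intros [z Hz] [w Hw]. simpl. tauto.
      - intros p [z Hz]. simpl. tauto. }
    split.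
    + intros H H'. specialize (H (proj2 (IHa M s) H')).
      pose proof (proj1 (Hb _) H) as H2. rewrite IHb in H2.
      unfold h in H2. simpl in H2. erewrite exist_eq; [exact H2|reflexivity].
    + intros H H'. apply Hb. rewrite IHb. unfold h; simpl.
      erewrite exist_eq; [apply (H (proj1 (IHa M s) H'))|reflexivity].
Qed.

Fixpoint atoms (A : Type) (f : form A) : list A :=
  match f with
  | Var p => p :: nil
  | Neg a | Nab a | Bul a => atoms a
  | And a b | Ann a b => atoms a ++ atoms b
  end.

Lemma rename_back (A B : Type) (f : A -> B) (g : B -> A) phi :
  (forall p, In p (atoms phi) -> g (f p) = p) -> rename g (rename f phi) = phi.
Proof.
  induction phi; simpl; intro H; f_equal; auto;
    try (apply IHphi1; intros; apply H; apply in_or_app; auto);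
    try (apply IHphi2; intros; apply H; apply in_or_app; auto).
Qed.

Lemma transport (P : Type) (p0 : P) (phi : form P)
  (comp : forall psi : form nat, valid psi -> provable psi) : valid phi -> provable phi.
Proof.
  intro Hv.
  set (L := atoms phi).
  set (g := fun n => nth n L p0).
  set (f := fun p => epsilon (inhabits 0) (fun n => nth n L p0 = p)).
  assert (Hgf : forall p, In p (atoms phi) -> g (f p) = p).
  { intros p Hp. unfold g, f. apply (epsilon_spec (inhabits 0) (fun n => nth n L p0 = p)).
    destruct (In_nth L p p0 Hp) as [n [_ Hn]]. exists n; exact Hn. }
  rewrite <- (rename_back f g phi Hgf). apply provable_rename. apply comp.
  intros M s. rewrite <- sat_rename. apply Hv.
Qed.

Fixpoint static (P : Type) (f : form P) : Prop :=
  match f with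
  | Var _ => True
  | Neg a => static a
  | And a b => static a /\ static b
  | Nab a => static a
  | Bul a => static a
  | Ann _ _ => False
  end.

Lemma ann_static (P : Type) (psi : form P) (Hs : static psi) (phi : form P) :
  static phi -> exists th, static th /\ provable (Iff (Ann psi phi) th).
Proof.
  induction phi as [p|a IHa|a IHa b IHb|a IHa|a IHa|a IHa b IHb]; simpl; intro H.
  - exists (Imp psi (Var p)). split. simpl; auto. apply AP.
  - destruct (IHa H) as [a' [Ha' Ea]]. exists (Imp psi (Neg a')). split. simpl; auto.
    eapply iff_trans. apply AN. apply cong_imp. apply iff_refl. apply cong_neg. exact Ea.
  - destruct (IHa (proj1 H)) as [a' [Ha' Ea]]. destruct (IHb (proj2 H)) as [b' [Hb' Eb]].
    exists (And a' b'). split. simpl; auto.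
    eapply iff_trans. apply AC. apply cong_and; auto.
  - destruct (IHa H) as [a' [Ha' Ea]].
    exists (Imp psi (And (Nab a') (Nab (Imp psi (Neg a'))))). split. simpl; auto.
    eapply iff_trans. apply ANab. apply cong_imp. apply iff_refl. apply cong_and.
    + apply cong_nab. exact Ea.
    + apply cong_nab. eapply iff_trans. apply AN. apply cong_imp. apply iff_refl.
      apply cong_neg. exact Ea.
  - destruct (IHa H) as [a' [Ha' Ea]]. exists (Imp psi (Bul a')). split. simpl; auto.
    eapply iff_trans. apply ABul. apply cong_imp. apply iff_refl. apply cong_bul. exact Ea.
  - contradiction.
Qed.

Lemma to_static (P : Type) (phi : form P) : exists th, static th /\ provable (Iff phi th).
Proof.
  induction phi as [p|a IHa|a IHa b IHb|a IHa|a IHa|a IHa b IHb].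
  - exists (Var p). split. simpl; auto. apply iff_refl.
  - destruct IHa as [a' [H1 H2]]. exists (Neg a'). split. simpl; auto. apply cong_neg; auto.
  - destruct IHa as [a' [H1 H2]]. destruct IHb as [b' [H3 H4]]. exists (And a' b'). split. simpl; auto. apply cong_and; auto.
  - destruct IHa as [a' [H1 H2]]. exists (Nab a'). split. simpl; auto. apply cong_nab; auto.
  - destruct IHa as [a' [H1 H2]]. exists (Bul a'). split. simpl; auto. apply cong_bul; auto.
  - destruct IHa as [a' [H1 H2]]. destruct IHb as [b' [H3 H4]].
    destruct (@ann_static P a' H1 b' H3) as [th [H5 H6]]. exists th. split; auto.
    eapply iff_trans. apply cong_ann; eauto. exact H6.
Qed.

Lemma reduce_completeness (P : Type)
  (scomp : forall th : form P, static th -> valid th -> provable th) :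
  forall phi : form P, valid phi -> provable phi.
Proof.
  intros phi Hv. destruct (to_static phi) as [th [Hs He]].
  assert (Hth : provable th).
  { apply scomp; auto. intros M s. pose proof (soundness He M s) as E.
    rewrite sat_iff in E. apply E. apply Hv. }
  eapply prov_taut2. exact He. exact Hth. taut.
Qed.

Notation F := (form nat).

Definition top : F := Imp (Var 0) (Var 0).
Fixpoint conj (L : list F) : F :=
  match L with nil => top | x :: L => And x (conj L) end.

Definition consis (G : F -> Prop) : Prop :=
  forall L, (forall x, In x L -> G x) -> ~ provable (Neg (conj L)).
Definition mcs (G : F -> Prop) : Prop := consis G /\ forall f, G f \/ G (Neg f).
Definition add (G : F -> Prop) (a : F) : F -> Prop := fun x => G x \/ x = a.

Lemma mcs_derive s L b : mcs s -> (forall x, In x L -> s x) -> provable (Imp (conj L) b) -> s b.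
Proof.
  intros [Hc Hm] HL Hp. destruct (Hm b) as [H|H]; auto. exfalso.
  apply (Hc (Neg b :: L)).
  - intros x [<-|Hx]; auto.
  - simpl. eapply prov_taut1. exact Hp. taut.
Qed.

Lemma mcs_prov s b : mcs s -> provable b -> s b.
Proof. intros Hs Hb. apply (mcs_derive nil); auto. intros x []. eapply prov_taut1; [exact Hb|]. unfold top. taut. Qed.

Lemma mcs_mp1 s a c : mcs s -> s a -> provable (Imp a c) -> s c.
Proof. intros Hs Ha Hp. apply (mcs_derive (a :: nil)); auto. intros x [<-|[]]; auto.
  simpl. eapply prov_taut1. exact Hp. taut. Qed.

Lemma mcs_mp2 s a b c : mcs s -> s a -> s b -> provable (Imp a (Imp b c)) -> s c.
Proof. intros Hs Ha Hb Hp. apply (mcs_derive (a :: b :: nil)); auto. intros x [<-|[<-|[]]]; auto.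
  simpl. eapply prov_taut1. exact Hp. taut. Qed.

Lemma mcs_neg s a : mcs s -> (s (Neg a) <-> ~ s a).
Proof.
  intros Hs. split.
  - intros H1 H2. apply (proj1 Hs (a :: Neg a :: nil)). intros x [<-|[<-|[]]]; auto.
    simpl. apply A0. taut.
  - intro H. destruct (proj2 Hs a); tauto.
Qed.

Lemma mcs_and s a b : mcs s -> (s (And a b) <-> s a /\ s b).
Proof.
  intro Hs. split.
  - intro H. split; eapply mcs_mp1; eauto; apply A0; taut.
  - intros [H1 H2]. apply (mcs_mp2 Hs H1 H2). apply A0; taut.
Qed.

Lemma mcs_or s a b : mcs s -> (s (Or a b) <-> s a \/ s b).
Proof.
  intro Hs. split.
  - intro H. destruct (classic (s a)) as [Ha|Ha]; auto. right.
    apply (mcs_neg a Hs) in Ha. apply (mcs_mp2 Hs H Ha). apply A0; taut.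
  - intros [H|H]; eapply mcs_mp1; eauto; apply A0; taut.
Qed.

Lemma mcs_imp s a b : mcs s -> s (Imp a b) -> s a -> s b.
Proof. intros Hs H1 H2. apply (mcs_mp2 Hs H1 H2). apply A0; taut. Qed.

Lemma mcs_iff s a b : mcs s -> provable (Iff a b) -> s a -> s b.
Proof. intros Hs H1 H2. eapply mcs_mp1; eauto. eapply prov_taut1; [exact H1|]. taut. Qed.

Lemma mcs_nn s a : mcs s -> s (Neg (Neg a)) -> s a.
Proof. intros Hs H. eapply mcs_mp1; eauto. apply A0; taut. Qed.

Lemma incons_add_aux (G : F -> Prop) a : forall L, (forall x, In x L -> add G a x) ->
  exists L', (forall x, In x L' -> G x) /\ provable (Imp (And (conj L') a) (conj L)).
Proof.
  induction L as [|y L IH]; intros HL.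
  - exists nil. split. intros x []. apply A0. unfold top. taut.
  - destruct IH as [L' [H1 H2]]. intros x Hx; apply HL; right; auto.
    destruct (HL y (or_introl eq_refl)) as [Hy|Hy].
    + exists (y :: L'). split. intros x [<-|Hx]; auto.
      simpl. eapply prov_taut1. exact H2. taut.
    + subst y. exists L'. split; auto. simpl. eapply prov_taut1. exact H2. taut.
Qed.

Lemma incons_add (G : F -> Prop) a : ~ consis (add G a) ->
  exists L, (forall x, In x L -> G x) /\ provable (Imp (conj L) (Neg a)).
Proof.
  intro H. unfold consis in H. apply not_all_ex_not in H. destruct H as [L H].
  apply imply_to_and in H. destruct H as [H1 H2]. apply NNPP in H2.
  destruct (@incons_add_aux G a L H1) as [L' [H3 H4]]. exists L'. split; auto.
  eapply prov_taut2. exact H2. exact H4. taut.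
Qed.

Lemma conj_app L1 L2 : provable (Imp (conj (L1 ++ L2)) (And (conj L1) (conj L2))).
Proof.
  induction L1 as [|x L1 IH]; simpl.
  - apply A0. unfold top. taut.
  - eapply prov_taut1. exact IH. taut.
Qed.

Lemma cons_step (G : F -> Prop) a : consis G -> ~ consis (add G a) -> consis (add G (Neg a)).
Proof.
  intros Hc H1. apply NNPP. intro H2.
  destruct (incons_add H1) as [L1 [H3 H4]]. destruct (incons_add H2) as [L2 [H5 H6]].
  apply (Hc (L1 ++ L2)).
  - intros x Hx. apply in_app_or in Hx. destruct Hx; auto.
  - pose proof (conj_app L1 L2) as H7.
    assert (H8 : provable (Neg (And (conj L1) (conj L2)))).
    { eapply prov_taut2. exact H4. exact H6. taut. }
    eapply prov_taut2. exact H7. exact H8. taut.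
Qed.

Definition enc_pair (a b : nat) : nat := to_nat (a, b).
Lemma enc_pair_inj a b c d : enc_pair a b = enc_pair c d -> a = c /\ b = d.
Proof. unfold enc_pair. intro H. assert (E := f_equal of_nat H). rewrite !cancel_of_to in E.
  inversion E; auto. Qed.

Fixpoint enc (f : F) : nat :=
  match f with
  | Var n => enc_pair 0 n
  | Neg a => enc_pair 1 (enc a)
  | And a b => enc_pair 2 (enc_pair (enc a) (enc b))
  | Nab a => enc_pair 3 (enc a)
  | Bul a => enc_pair 4 (enc a)
  | Ann a b => enc_pair 5 (enc_pair (enc a) (enc b))
  end.

Lemma enc_inj : forall f g, enc f = enc g -> f = g.
Proof.
  induction f; destruct g; simpl; intro H; apply enc_pair_inj in H; destruct H as [H1 H2];
    try discriminate; try (f_equal; auto; fail);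
    try (apply enc_pair_inj in H2; destruct H2; f_equal; auto).
Qed.

Definition dec (n : nat) : F := epsilon (inhabits (Var 0)) (fun f => enc f = n).
Lemma dec_enc f : dec (enc f) = f.
Proof. apply enc_inj. unfold dec. apply (epsilon_spec (inhabits (Var 0)) (fun g => enc g = enc f)).
  exists f; reflexivity. Qed.

Fixpoint chain (G : F -> Prop) (n : nat) : F -> Prop :=
  match n with
  | 0 => G
  | S n => fun x => chain G n x \/ (consis (add (chain G n) (dec n)) /\ x = dec n)
                   \/ (~ consis (add (chain G n) (dec n)) /\ x = Neg (dec n))
  end.

Lemma chain_mono G n m x : n <= m -> chain G n x -> chain G m x.
Proof. induction 1; simpl; auto. Qed.

Lemma chain_cons G : consis G -> forall n, consis (chain G n).
Proof.
  intros Hc n. induction n as [|n IH]; simpl; auto.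
  destruct (classic (consis (add (chain G n) (dec n)))) as [H|H].
  - intros L HL. apply H. intros x Hx. destruct (HL x Hx) as [?|[[_ ?]|[? _]]]; [left|right|]; auto.
    contradiction.
  - pose proof (cons_step IH H) as H'. intros L HL. apply H'.
    intros x Hx. destruct (HL x Hx) as [?|[[? _]|[_ ?]]]; [left|contradiction|right]; auto.
Qed.

Lemma lindenbaum (G : F -> Prop) : consis G -> exists s, mcs s /\ forall x, G x -> s x.
Proof.
  intro Hc. exists (fun x => exists n, chain G n x). split; [split|].
  - intros L HL.
    assert (Hn : exists n, forall x, In x L -> chain G n x).
    { clear - HL. induction L as [|y L IH].
      - exists 0. intros x [].
      - destruct IH as [n Hn]. intros x Hx; apply HL; right; auto.
        destruct (HL y (or_introl eq_refl)) as [m Hm].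
        exists (max n m). intros x [<-|Hx].
        + eapply chain_mono; [|exact Hm]. apply Nat.le_max_r.
        + eapply chain_mono; [|apply Hn; exact Hx]. apply Nat.le_max_l. }
    destruct Hn as [n Hn]. apply (chain_cons Hc n). exact Hn.
  - intro f. destruct (classic (consis (add (chain G (enc f)) (dec (enc f))))) as [H|H].
    + left. exists (S (enc f)). simpl. right; left. rewrite dec_enc in *. auto.
    + right. exists (S (enc f)). simpl. right; right. rewrite dec_enc in *. auto.
  - intros x Hx. exists 0. exact Hx.
Qed.

Definition boxed (s : F -> Prop) (c : F) : Prop :=
  (s c /\ ~ s (Bul c)) \/ (~ s c /\ s (Bul (Neg c)) /\ ~ s (Nab c)).

Lemma bul_taut s a b : mcs s -> tautology (Iff a b) -> s (Bul a) -> s (Bul b).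
Proof. intros Hs Ht H. eapply mcs_iff; eauto. apply cong_bul. apply A0; exact Ht. Qed.
Lemma bul_prov s a b : mcs s -> provable (Iff a b) -> s (Bul a) -> s (Bul b).
Proof. intros Hs Ht H. eapply mcs_iff; eauto. apply cong_bul. exact Ht. Qed.
Lemma nab_prov s a b : mcs s -> provable (Iff a b) -> s (Nab a) -> s (Nab b).
Proof. intros Hs Ht H. eapply mcs_iff; eauto. apply cong_nab. exact Ht. Qed.

Lemma nab_neg s a : mcs s -> (s (Nab (Neg a)) <-> s (Nab a)).
Proof. intros Hs. split; intro H; eapply mcs_iff; eauto.
  - apply iff_sym. apply A2.
  - apply A2. Qed.

Lemma nab_or s a b : mcs s -> s (Nab (Or a b)) -> s (Nab a) \/ s (Nab b).
Proof.
  intros Hs H. unfold Or in H. apply (proj1 (nab_neg _ Hs)) in H.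
  assert (H2 := mcs_mp1 Hs H (A4 (Neg a) (Neg b))). apply (mcs_or _ _ Hs) in H2.
  destruct H2 as [H2|H2]; apply (proj1 (nab_neg _ Hs)) in H2; auto.
Qed.

Lemma nab_and s a b : mcs s -> s (Nab (And a b)) -> s (Nab a) \/ s (Nab b).
Proof. intros Hs H. apply (mcs_or _ _ Hs). exact (mcs_mp1 Hs H (A4 a b)). Qed.

Lemma bul_and s a b : mcs s -> s (Bul (And a b)) -> s (Bul a) \/ s (Bul b).
Proof. intros Hs H. apply (mcs_or _ _ Hs). exact (mcs_mp1 Hs H (A5 a b)). Qed.

Lemma bul_self s a : mcs s -> s (Bul a) -> s a.
Proof. intros Hs H. exact (mcs_mp1 Hs H (A1 a)). Qed.

Lemma nab_bul s a : mcs s -> s (Nab a) -> s a -> s (Bul a).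
Proof.
  intros Hs H1 H2. assert (H3 := mcs_mp1 Hs H1 (A6 a)). apply (mcs_or _ _ Hs) in H3.
  destruct H3 as [H3|H3]; auto. apply bul_self in H3; auto. apply (mcs_neg _ Hs) in H3. contradiction.
Qed.

Lemma a7 s f g h : mcs s -> s (Bul (Imp f g)) -> s (Bul (Imp (Neg f) h)) -> s (Nab f).
Proof. intros Hs H1 H2. apply (mcs_mp1 (a := And (Bul (Imp f g)) (Bul (Imp (Neg f) h))) Hs).
  apply (mcs_and _ _ Hs); auto. apply A7. Qed.

Lemma a3 s f g : mcs s -> s (Bul (Imp g f)) -> s f -> s (Bul f).
Proof. intros Hs H1 H2. apply (mcs_mp1 (a := And (Bul (Imp g f)) f) Hs).
  apply (mcs_and _ _ Hs); auto. apply A3. Qed.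

Lemma box_mono s c p : mcs s -> provable (Imp c p) -> boxed s c -> boxed s p.
Proof.
  intros Hs Hi [[H1 H2]|[H1 [H2 H3]]].
  - left. split. exact (mcs_mp1 Hs H1 Hi). intro HB. apply H2.
    assert (E : provable (Iff p (Imp (Neg p) c))) by (eapply prov_taut1; [exact Hi|taut]).
    apply (a3 c (Neg p) Hs). exact (bul_prov Hs E HB). exact H1.
  - assert (B1 : s (Bul (Imp c (Neg c)))) by (eapply bul_taut; eauto; taut).
    destruct (classic (s p)) as [Hp|Hp].
    + left. split; auto. intro HB. apply H3.
      assert (E : provable (Iff p (Imp (Neg c) p))) by (eapply prov_taut1; [exact Hi|taut]).
      apply (a7 c (Neg c) p Hs B1). exact (bul_prov Hs E HB).
    + right. split; auto. split.
      * assert (E : provable (Iff (Neg c) (Imp c (Neg p)))) by (eapply prov_taut1; [exact Hi|taut]).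
        apply (a3 (Neg p) c Hs). exact (bul_prov Hs E H2). apply (mcs_neg _ Hs); auto.
      * intro HN. apply H3.
        assert (E : provable (Iff p (Or c (And p (Neg c))))) by (eapply prov_taut1; [exact Hi|taut]).
        destruct (nab_or _ _ Hs (nab_prov Hs E HN)) as [H4|H4]; [exact H4|].
        assert (H5 := mcs_mp1 Hs H4 (A6 _)). apply (mcs_or _ _ Hs) in H5.
        destruct H5 as [H5|H5].
        -- apply bul_self in H5; auto. apply (mcs_and _ _ Hs) in H5. tauto.
        -- apply (a7 c (Neg c) (Neg p) Hs B1). eapply bul_taut; eauto. taut.
Qed.

Lemma box_and12 s a b : mcs s -> s a -> ~ s (Bul a) -> ~ s b -> s (Bul (Neg b)) -> ~ s (Nab b) ->
  boxed s (And a b).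
Proof.
  intros Hs H1 H2 H3 H4 H5. right. split. rewrite (mcs_and _ _ Hs). tauto. split.
  - assert (B1 : s (Bul (Imp b (And a (Neg b))))) by (eapply bul_taut; eauto; taut).
    assert (B2 : s (Bul (And a (Neg b)))).
    { apply (a3 (And a (Neg b)) b Hs B1). apply (mcs_and _ _ Hs). split; auto. apply (mcs_neg _ Hs); auto. }
    assert (B3 : s (Bul (And a (Imp a (Neg b))))) by (eapply bul_taut; eauto; taut).
    destruct (bul_and _ _ Hs B3) as [B4|B4]; [contradiction|].
    eapply bul_taut; eauto. taut.
  - intro HN. destruct (nab_and _ _ Hs HN) as [H6|H6]; auto. apply H2. apply nab_bul; auto.
Qed.

Lemma box_and s a b : mcs s -> boxed s a -> boxed s b -> boxed s (And a b).
Proof.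
  intros Hs [[H1 H2]|[H1 [H2 H3]]] [[H4 H5]|[H4 [H5 H6]]].
  - left. split. apply (mcs_and _ _ Hs); auto. intro HB. destruct (bul_and _ _ Hs HB); auto.
  - apply box_and12; auto.
  - apply (box_mono (c := And b a) Hs). apply A0; taut. apply box_and12; auto.
  - right. split. rewrite (mcs_and _ _ Hs). tauto. split.
    + apply NNPP. intro HN. apply H6.
      assert (B1 : s (Bul (And (Imp a b) (Neg (And a b))))) by (apply (bul_taut (a := Neg a) Hs); [taut|exact H2]).
      destruct (bul_and _ _ Hs B1) as [B2|B2]; [|contradiction].
      apply (a7 b (Neg b) (Neg a) Hs).
      * apply (bul_taut (a := Neg b) Hs); [taut|exact H5].
      * apply (bul_taut (a := Imp a b) Hs); [taut|exact B2].
    + intro HN. destruct (nab_and _ _ Hs HN); auto.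
Qed.

Lemma box_conj s L : mcs s -> (forall x, In x L -> boxed s x) -> boxed s (conj L).
Proof.
  intros Hs. induction L as [|x L IH]; simpl; intro HL.
  - left. split. apply mcs_prov; auto. apply A0. unfold top. taut.
    apply (mcs_neg _ Hs). apply mcs_prov; auto. apply R2. apply A0. unfold top. taut.
  - apply box_and; auto.
Qed.

Lemma exists_succ s p : mcs s -> ~ boxed s p ->
  exists t, mcs t /\ (forall c, boxed s c -> t c) /\ ~ t p.
Proof.
  intros Hs Hb. destruct (classic (consis (add (boxed s) (Neg p)))) as [H|H].
  - destruct (lindenbaum H) as [t [Ht1 Ht2]]. exists t. split; auto. split.
    + intros c Hc. apply Ht2. left; auto.
    + apply (mcs_neg _ Ht1). apply Ht2. right; auto.
  - exfalso. destruct (incons_add H) as [L [H1 H2]]. apply Hb.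
    apply (box_mono (c := conj L) Hs). eapply prov_taut1; [exact H2|taut].
    apply box_conj; auto.
Qed.

Definition cstate := {s : F -> Prop | mcs s}.
Definition CM : model nat :=
  @Model nat cstate (fun s t => forall c, boxed (proj1_sig s) c -> proj1_sig t c)
    (fun n s => proj1_sig s (Var n)).

Lemma nab_succ s x : mcs s -> s (Nab x) -> s x ->
  (exists t, mcs t /\ (forall c, boxed s c -> t c) /\ t x) /\
  (exists u, mcs u /\ (forall c, boxed s c -> u c) /\ ~ u x).
Proof.
  intros Hs H1 H2. split.
  - destruct (@exists_succ s (Neg x) Hs) as [t [Ht1 [Ht2 Ht3]]].
    + intros [[H3 _]|[_ [_ H3]]].
      * apply (mcs_neg _ Hs) in H3. contradiction.
      * apply H3. apply (nab_neg _ Hs). auto.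
    + exists t. split; auto. split; auto. destruct (proj2 Ht1 x); auto. contradiction.
  - destruct (@exists_succ s x Hs) as [t [Ht1 [Ht2 Ht3]]].
    + intros [[_ H3]|[H3 _]]; auto. apply H3. apply nab_bul; auto.
    + exists t. auto.
Qed.

Lemma delta_box s x : mcs s -> ~ s (Nab x) -> s x -> boxed s x \/ boxed s (Neg x).
Proof.
  intros Hs H1 H2. destruct (classic (s (Bul x))) as [H3|H3].
  - right. right. split. intro H4. apply (mcs_neg _ Hs) in H4. contradiction.
    split. eapply bul_taut; eauto. taut. rewrite (nab_neg _ Hs). auto.
  - left. left. auto.
Qed.

Lemma truth (f : F) : static f -> forall s : state CM, sat CM s f <-> proj1_sig s f.
Proof.
  induction f as [p|a IHa|a IHa b IHb|a IHa|a IHa|a IHa b IHb]; simpl; intros Hst [s Hs]; simpl.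
  - tauto.
  - rewrite IHa; auto. simpl. rewrite (mcs_neg _ Hs). tauto.
  - rewrite IHa, IHb; try tauto. simpl. rewrite (mcs_and _ _ Hs). tauto.
  - split.
    + intros [[t Ht] [[u Hu] [H1 [H2 [H3 H4]]]]]. simpl in *.
      rewrite IHa in H3, H4; auto. simpl in *.
      apply NNPP. intro HN.
      destruct (classic (s a)) as [Ha|Ha].
      * destruct (delta_box _ Hs HN Ha) as [B|B].
        -- apply H4. apply H2. exact B.
        -- exact (proj1 (mcs_neg _ Ht) (H1 _ B) H3).
      * apply (mcs_neg _ Hs) in Ha. rewrite <- (nab_neg _ Hs) in HN.
        destruct (delta_box _ Hs HN Ha) as [B|B].
        -- exact (proj1 (mcs_neg _ Ht) (H1 _ B) H3).
        -- apply H4. apply mcs_nn; [exact Hu|]. apply H2. exact B.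
    + intro H. destruct (classic (s a)) as [Ha|Ha].
      * destruct (nab_succ _ Hs H Ha) as [[t [Ht1 [Ht2 Ht3]]] [u [Hu1 [Hu2 Hu3]]]].
        exists (exist _ t Ht1), (exist _ u Hu1). simpl. split; auto. split; auto.
        rewrite !IHa; auto.
      * apply (mcs_neg _ Hs) in Ha. rewrite <- (nab_neg _ Hs) in H.
        destruct (nab_succ _ Hs H Ha) as [[t [Ht1 [Ht2 Ht3]]] [u [Hu1 [Hu2 Hu3]]]].
        exists (exist _ u Hu1), (exist _ t Ht1). simpl. split; auto. split; auto.
        rewrite !IHa; auto. simpl. split.
        -- destruct (proj2 Hu1 a); auto. contradiction.
        -- rewrite <- (mcs_neg _ Ht1). auto.
  - split.
    + intros [H1 [[t Ht] [H2 H3]]]. simpl in *. rewrite IHa in H1, H3; auto. simpl in *.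
      apply NNPP. intro HN. apply H3. apply H2. left. auto.
    + intro H. assert (Ha := bul_self _ Hs H). split.
      * rewrite IHa; auto.
      * destruct (@exists_succ s a Hs) as [t [Ht1 [Ht2 Ht3]]].
        -- intros [[_ H3]|[H3 _]]; auto.
        -- exists (exist _ t Ht1). simpl. split; auto. rewrite IHa; auto.
  - contradiction.
Qed.

Lemma static_completeness (th : F) : static th -> valid th -> provable th.
Proof.
  intros Hst Hv. apply NNPP. intro Hn.
  assert (Hc : consis (add (fun _ => False) (Neg th))).
  { apply NNPP. intro H. destruct (incons_add H) as [L [H1 H2]].
    destruct L as [|x L]; [|destruct (H1 x (or_introl eq_refl))].
    apply Hn. eapply prov_taut1. exact H2. unfold top. taut. }
  destruct (lindenbaum Hc) as [s [Hs1 Hs2]].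
  assert (Hs3 : s (Neg th)) by (apply Hs2; right; auto).
  apply (mcs_neg _ Hs1) in Hs3. apply Hs3.
  apply (truth th Hst (exist _ s Hs1)). apply Hv.
Qed.

Theorem theorem5 (P : Type) (p0 : P) (phi : form P) :
  provable phi <-> valid phi.
Proof.
  split.
  - apply soundness.
  - apply (transport p0). apply reduce_completeness. exact static_completeness.
Qed.
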